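(* Let $n\ge2$, $f:\mathbb{R}^n\to\mathbb{R}^n$ continuously differentiable, $b_0\in\mathbb{R}^n_{\ge0}$, $\mu,\theta>0$, $r:=\mu/\theta$. Suppose $x^*\in\mathbb{R}^n_{\ge0}$ and $u_*>0$ satisfy $x^*_n=r$ and $f(x^* )-u_*re_n+b_0=0$. Let $J:=\partial f/\partial x(x^* )$, $H_n(s):=e_n^T\big(sI-(J-u_*e_ne_n^T)\big)^{-1}e_n$, and assume $H_n(0)>0$ and that there exists a symmetric positive definite $P_1\in\mathbb{R}^{(n-1)\times(n-1)}$ such that, with $P:=\mathrm{diag}(P_1,1)$, $$(J-u_*e_ne_n^T)^TP+P(J-u_*e_ne_n^T)\ \text{is negative definite}$$ (equivalently, writing $J_{11}=S^TJS$, $J_{12}=S^TJe_n$, $J_{21}=e_n^TJS$, $J_{22}=e_n^TJe_n$, the matrix $\begin{bmatrix}P_1J_{11}+J_{11}^TP_1 & P_1J_{12}+J_{21}^T\\ J_{12}^TP_1+J_{21} & 2(J_{22}-u_* )\end{bmatrix}$ is negative definite). Then for all $\eta,k_p>0$ the equilibrium $\big(x^*,\ \mu/(\eta u_* ),\ u_*/k_p\big)$ of $$\dot x=f(x)-k_px_nz_2e_n+b_0,\qquad \dot z_1=\mu-\eta k_pz_1z_2,\qquad \dot z_2=\theta x_n-\eta k_pz_1z_2$$ is locally exponentially stable.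
   Context: $S:=[e_1\ \cdots\ e_{n-1}]$, $e_i$ standard basis vectors of $\mathbb{R}^n$; $x_n=e_n^Tx$. Hurwitz stable: all eigenvalues have negative real part. An equilibrium is called locally exponentially stable here if the Jacobian matrix of the vector field at the equilibrium is Hurwitz stable. *)

(* Defs.v *)
From mathcomp Require Import all_boot all_algebra all_classical all_reals all_analysis.
From mathcomp Require Import complex.
Set Implicit Arguments. Unset Strict Implicit. Unset Printing Implicit Defensive.
Import GRing.Theory Num.Theory numFieldNormedType.Exports.
Local Open Scope ring_scope.

(* the last standard basis vector e_n of R^n (index n-1 in 0-based indexing) *)
Definition en (R : realType) (n : nat) : 'cV[R]_n :=
  \col_(i < n) (if (i == n.-1 :> nat) then 1 else 0).

Definition xlast (R : realType) (n : nat) (x : 'cV[R]_n) : R :=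
  ((en R n)^T *m x) 0 0.

Definition Smat (R : realType) (n : nat) : 'M[R]_(n, n.-1) :=
  \matrix_(i < n, j < n.-1) (if (i == j :> nat) then 1 else 0).

(* P = diag(P1, 1) = S P1 S^T + e_n e_n^T *)
Definition diagP (R : realType) (n : nat) (P1 : 'M[R]_n.-1) : 'M[R]_n :=
  Smat R n *m P1 *m (Smat R n)^T + en R n *m (en R n)^T.

Definition jac (R : realType) (m n : nat) (g : 'cV[R]_n -> 'cV[R]_m)
  (x : 'cV[R]_n) : 'M[R]_(m, n) :=
  \matrix_(i < m, j < n) ('d g x (delta_mx j 0)) i 0.

Definition C1 (R : realType) (m n : nat) (g : 'cV[R]_n -> 'cV[R]_m) : Prop :=
  (forall x, differentiable g x) /\ continuous (jac g).

Definition nonneg_vec (R : realType) (n : nat) (x : 'cV[R]_n) : Prop :=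
  forall i, 0 <= x i 0.

Definition pos_def (R : realType) (n : nat) (M : 'M[R]_n) : Prop :=
  M^T = M /\ forall v : 'cV[R]_n, v != 0 -> 0 < (v^T *m M *m v) 0 0.

Definition neg_def (R : realType) (n : nat) (M : 'M[R]_n) : Prop :=
  M^T = M /\ forall v : 'cV[R]_n, v != 0 -> (v^T *m M *m v) 0 0 < 0.

Definition hurwitz (R : realType) (n : nat) (A : 'M[R]_n) : Prop :=
  forall lam : R[i], eigenvalue (map_mx (fun a : R => (a%:C)%C) A) lam -> 'Re lam < 0.

Definition Hn (R : realType) (n : nat) (A : 'M[R]_n) (s : R) : R :=
  ((en R n)^T *m invmx (s%:M - A) *m en R n) 0 0.

Definition closed_loop (R : realType) (n : nat) (f : 'cV[R]_n -> 'cV[R]_n)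
  (b0 : 'cV[R]_n) (mu theta eta kp : R) (v : 'cV[R]_(n + 2)) : 'cV[R]_(n + 2) :=
  let x := usubmx v in
  let z := dsubmx v in
  let z1 := z 0 0 in
  let z2 := z 1 0 in
  col_mx (f x - (kp * xlast x * z2) *: en R n + b0)
         (\col_(k < 2) (if k == 0 then mu - eta * kp * z1 * z2
                        else theta * xlast x - eta * kp * z1 * z2)).

Definition eq_point (R : realType) (n : nat) (x : 'cV[R]_n) (z1 z2 : R)
  : 'cV[R]_(n + 2) :=
  col_mx x (\col_(k < 2) (if k == 0 then z1 else z2)).

(* local exponential stability in the sense of the paper: Jacobian Hurwitz *)
Definition loc_exp_stable (R : realType) (m : nat) (F : 'cV[R]_m -> 'cV[R]_m)
  (xe : 'cV[R]_m) : Prop :=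
  hurwitz (jac F xe).

(* Main.v *)
Require Import Defs.
From mathcomp Require Import all_boot all_algebra all_classical all_reals all_analysis.
From mathcomp Require Import complex.
From mathcomp Require Import ring lra.
Import GRing.Theory Num.Theory numFieldNormedType.Exports.
Local Open Scope ring_scope.
Import order.Order.TTheory.
Lemma eig_tr (F : fieldType) m (g : 'M[F]_m) a : eigenvalue g a -> eigenvalue g^T a.
Proof.
rewrite /eigenvalue /eigenspace -!mxrank_eq0 !mxrank_ker.
have -> : g^T - a%:M = (g - a%:M)^T by rewrite raddfB /= tr_scalar_mx.
by rewrite mxrank_tr.
Qed.
Section CplxR.
Variable R : realType.
Implicit Types z : R[i].
Lemma ReD0 z1 z2 : complex.Re (z1 + z2) = complex.Re z1 + complex.Re z2.
Proof. by case: z1 => a b; case: z2. Qed.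
Lemma ImD0 z1 z2 : complex.Im (z1 + z2) = complex.Im z1 + complex.Im z2.
Proof. by case: z1 => a b; case: z2. Qed.
Lemma Re00 : complex.Re (0 : R[i]) = 0. Proof. by []. Qed.
Lemma Im00 : complex.Im (0 : R[i]) = 0. Proof. by []. Qed.
Lemma ReM0 z1 z2 : complex.Re (z1 * z2) = complex.Re z1 * complex.Re z2 - complex.Im z1 * complex.Im z2.
Proof. by case: z1 => a b; case: z2. Qed.
Lemma ImM0 z1 z2 : complex.Im (z1 * z2) = complex.Re z1 * complex.Im z2 + complex.Im z1 * complex.Re z2.
Proof. by case: z1 => a b; case: z2. Qed.
Lemma ReC (r : R) : complex.Re (r%:C)%C = r. Proof. by []. Qed.
Lemma ImC (r : R) : complex.Im (r%:C)%C = 0. Proof. by []. Qed.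
End CplxR.

Lemma eig_real (R : realType) m (M : 'M[R]_m) (lam : R[i]) :
  eigenvalue (map_mx (fun a : R => (a%:C)%C) M) lam ->
  exists p q : 'cV[R]_m, (p != 0 \/ q != 0) /\
    M *m p = complex.Re lam *: p - complex.Im lam *: q /\
    M *m q = complex.Im lam *: p + complex.Re lam *: q.
Proof.
move=> /eig_tr /eigenvalueP [v hv vn0].
set w := v^T.
have hw : map_mx (fun a : R => (a%:C)%C) M *m w = lam *: w.
  by rewrite /w; apply: trmx_inj; rewrite trmx_mul trmxK hv linearZ /= trmxK.
exists (map_mx (@complex.Re R) w), (map_mx (@complex.Im R) w); split; [|split].
- have [h1|] := eqVneq (map_mx (@complex.Re R) w) 0; last by left.
  have [h2|] := eqVneq (map_mx (@complex.Im R) w) 0; last by right.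
  exfalso; move: vn0; rewrite -trmx_eq0 -/w => /negP; apply; apply/eqP/matrixP => i j.
  have := congr1 (fun A : 'M[R]_(m,1) => A i j) h1; have := congr1 (fun A : 'M[R]_(m,1) => A i j) h2.
  rewrite !mxE; case: (v j i) => a b /= -> ->; by [].
- apply/matrixP => i j; have := congr1 (fun A : 'M[R[i]]_(m,1) => complex.Re (A i j)) hw.
  rewrite !mxE ReM0 => <-.
  rewrite (big_morph _ (@ReD0 R) (@Re00 R)); apply: eq_bigr => k _.
  by rewrite !mxE ReM0 ReC ImC mul0r subr0.
- apply/matrixP => i j; have := congr1 (fun A : 'M[R[i]]_(m,1) => complex.Im (A i j)) hw.
  rewrite !mxE ImM0 addrC => <-.
  rewrite (big_morph _ (@ImD0 R) (@Im00 R)); apply: eq_bigr => k _.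
  by rewrite !mxE ImM0 ReC ImC mul0r addr0.
Qed.
Goal forall (R : realType) (lam : R[i]), 0 <= complex.Re lam -> ~ ('Re lam < 0).
move=> R lam h; rewrite -complexRe ltcE /= => /andP [_].
by rewrite ltNge h.
Qed.
Section DiffGen.
Variable R : realType.

Lemma continuous_usubmx' m1 m2 n :
  continuous (usubmx : 'M[R]_(m1 + m2, n) -> 'M[R]_(m1, n)).
Proof.
move=> u A /nbhs_ballP[e /= e0 eA].
apply/nbhs_ballP; exists e => //= v [_ uv]; apply: eA; split => // i j.
by apply: (le_lt_trans _ (uv (lshift m2 i) j)); rewrite !mxE.
Qed.

Lemma cV_sum_delta m (p : 'cV[R]_m) : p = \sum_(j < m) p j 0 *: delta_mx j 0.
Proof.
apply/matrixP => i k; rewrite (ord1 k) summxE (bigD1 i) //= big1 ?addr0.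
  by rewrite !mxE !eqxx /= mulr1.
by move=> j hj; rewrite !mxE eq_sym (negbTE hj) /= mulr0.
Qed.

Lemma jac_mul m n (g : 'cV[R]_n -> 'cV[R]_m) x (p : 'cV[R]_n) :
  jac g x *m p = 'd g x p.
Proof.
rewrite {2}(@cV_sum_delta n p) linear_sum; apply/matrixP => i k.
rewrite (ord1 k) !mxE summxE; apply: eq_bigr => j _.
by rewrite linearZ !mxE mulrC.
Qed.

Lemma diff_coord m n (F : 'cV[R]_n -> 'cV[R]_m) x h i :
  differentiable F x -> ('d F x h) i 0 = 'd (fun y => F y i 0) x h.
Proof.
move=> dF.
have @c : {linear 'cV[R]_m -> R}.
  by exists (fun N : 'cV[R]_m => N i 0); do 2![eexists]; do ?[constructor];
     rewrite ?mxE// => ? *; rewrite ?mxE//; move=> ?; rewrite !mxE.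
have cc : continuous c by exact: coord_continuous.
rewrite (_ : (fun y => F y i 0) = c \o F) //.
rewrite [in RHS]diff_comp //; last exact: differentiable_coord.
rewrite /=. rewrite (@diff_lin _ _ _ c) //.
Qed.

Lemma diff_from_coord m n (F : 'cV[R]_n -> 'cV[R]_m) x :
  (forall i, differentiable (fun y => F y i 0) x) -> differentiable F x.
Proof.
move=> hF.
have -> : F = \sum_(i < m) (fun y => F y i 0 *: (delta_mx i 0 : 'cV[R]_m)).
  by rewrite fct_sumE; apply/funext => y; exact: cV_sum_delta.
apply: differentiable_sum => i; exact: differentiableZl.
Qed.
End DiffGen.
Section CL.
Variable R : realType.
Definition crd {m} (k : 'I_m) : 'cV[R]_m -> R := fun y => y k 0.

Lemma crd_diff m k (x : 'cV[R]_m) : is_diff x (crd k) (crd k).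
Proof.
have @c : {linear 'cV[R]_m -> R}.
  by exists (fun N : 'cV[R]_m => N k 0); do 2![eexists]; do ?[constructor];
     rewrite ?mxE// => ? *; rewrite ?mxE//; move=> ?; rewrite !mxE.
have cc : continuous c by exact: coord_continuous.
apply: DiffDef; first exact: differentiable_coord.
by rewrite (@diff_lin _ _ _ c).
Qed.

Variables (n : nat) (f : 'cV[R]_n -> 'cV[R]_n) (hfd : forall x, differentiable f x).
Variables (b0 : 'cV[R]_n) (mu theta eta kp : R).
Variable ln : 'I_n.
Hypothesis hln : forall x : 'cV[R]_n, xlast x = x ln 0.

Definition fA (j : 'I_n) : 'cV[R]_(n + 2) -> R := fun y => f (usubmx y) j 0.

Lemma fA_diff j (x : 'cV[R]_(n + 2)) :
  is_diff x (fA j) (fun h => ('d f (usubmx x) (usubmx h)) j 0).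
Proof.
have cu : continuous (usubmx : 'cV[R]_(n + 2) -> 'cV[R]_n) by exact: continuous_usubmx'.
have du : differentiable (usubmx : 'cV[R]_(n + 2) -> 'cV[R]_n) x.
  exact: (@linear_differentiable _ _ _ usubmx).
have dfu : differentiable (f \o usubmx) x by apply: differentiable_comp.
have -> : fA j = crd j \o (f \o usubmx) by [].
apply: DiffDef; first by apply: differentiable_comp => //; exact: differentiable_coord.
rewrite diff_comp //; last exact: differentiable_coord.
rewrite diff_comp //.
rewrite (@diff_lin _ _ _ usubmx) //.
have hc := crd_diff _ j (f (usubmx x)); by rewrite diff_val.
Qed.
End CL.
Section CL2.
Variable R : realType.
Variables (n : nat) (f : 'cV[R]_n -> 'cV[R]_n) (hfd : forall x, differentiable f x).
Variables (b0 : 'cV[R]_n) (mu theta eta kp : R).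
Variable ln : 'I_n.
Hypothesis hln : forall x : 'cV[R]_n, xlast x = x ln 0.
Let F := closed_loop f b0 mu theta eta kp.
Let L : 'I_(n + 2) := lshift 2 ln.
Let Z1 : 'I_(n + 2) := rshift n (0 : 'I_2).
Let Z2 : 'I_(n + 2) := rshift n (1 : 'I_2).

Lemma compT j : (fun y => F y (lshift 2 j) 0) =
  @fA R n f j - (kp * en R n j 0) *: (crd R L * crd R Z2) + cst (b0 j 0).
Proof.
apply/funext => y; rewrite /F /closed_loop /= col_mxEu !mxE hln /fA /crd /= !mxE.
rewrite /L /Z2 !fctE /=. rewrite -[_ *: _]/(_ * _); ring.
Qed.

Lemma compZ1 : (fun y => F y Z1 0) = cst mu - (eta * kp) *: (crd R Z1 * crd R Z2).
Proof.
apply/funext => y; rewrite /F /closed_loop /Z1 /= col_mxEd !mxE /crd /= ?mxE /=.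
rewrite !fctE /= -![_ *: _]/(_ * _); ring.
Qed.

Lemma compZ2 : (fun y => F y Z2 0) = theta *: crd R L - (eta * kp) *: (crd R Z1 * crd R Z2).
Proof.
apply/funext => y; rewrite /F /closed_loop /Z2 /= col_mxEd !mxE hln /crd /= ?mxE /=.
rewrite !fctE /= -![_ *: _]/(_ * _); ring.
Qed.

Lemma dF_diff ye : differentiable F ye.
Proof.
apply: diff_from_coord => i; rewrite -(splitK i); case: (fintype.split i) => [j|k] /=.
  rewrite compT.
  have h1 := @fA_diff R n f hfd j ye; have h2 := crd_diff R _ L ye; have h3 := crd_diff R _ Z2 ye.
  exact: ex_diff.
have h2 := crd_diff R _ L ye; have h3 := crd_diff R _ Z2 ye; have h4 := crd_diff R _ Z1 ye.
have [->|->] : k = 0 \/ k = 1.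
  by case: k => [[|[|]]] //= ?; [left|right]; apply/val_inj.
  by rewrite -/Z1 compZ1; exact: ex_diff.
by rewrite -/Z2 compZ2; exact: ex_diff.
Qed.

Lemma dF_top ye h j : ('d F ye h) (lshift 2 j) 0 =
  ('d f (usubmx ye) (usubmx h)) j 0 - kp * en R n j 0 * (ye L 0 * h Z2 0 + ye Z2 0 * h L 0).
Proof.
rewrite diff_coord; last exact: dF_diff.
rewrite compT.
have h1 := @fA_diff R n f hfd j ye; have h2 := crd_diff R _ L ye; have h3 := crd_diff R _ Z2 ye.
rewrite diff_val !fctE /crd /= -![_ *: _]/(_ * _).
have -> : (0 : 'cV[R]_(n + 2) -> R) h = 0 by [].
ring.
Qed.

Lemma dF_Z1 ye h : ('d F ye h) Z1 0 = - (eta * kp) * (ye Z1 0 * h Z2 0 + ye Z2 0 * h Z1 0).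
Proof.
rewrite diff_coord; last exact: dF_diff.
rewrite compZ1.
have h2 := crd_diff R _ Z1 ye; have h3 := crd_diff R _ Z2 ye.
rewrite diff_val !fctE /crd /= -![_ *: _]/(_ * _).
try (have -> : (0 : 'cV[R]_(n + 2) -> R) h = 0 by []).
ring.
Qed.

Lemma dF_Z2 ye h : ('d F ye h) Z2 0 = theta * h L 0 - (eta * kp) * (ye Z1 0 * h Z2 0 + ye Z2 0 * h Z1 0).
Proof.
rewrite diff_coord; last exact: dF_diff.
rewrite compZ2.
have h1 := crd_diff R _ L ye; have h2 := crd_diff R _ Z1 ye; have h3 := crd_diff R _ Z2 ye.
rewrite diff_val !fctE /crd /= -![_ *: _]/(_ * _).
try (have -> : (0 : 'cV[R]_(n + 2) -> R) h = 0 by []).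
ring.
Qed.
End CL2.
Section Lyap.
Variable R : realType.
Definition qf {m} (u : 'cV[R]_m) (M : 'M[R]_m) (v : 'cV[R]_m) : R := (u^T *m M *m v) 0 0.

Lemma qf_sym m (M : 'M[R]_m) u v : M^T = M -> qf u M v = qf v M u.
Proof.
move=> hM; rewrite /qf.
transitivity ((u^T *m M *m v)^T 0 0); first by rewrite [RHS]mxE.
by rewrite !trmx_mul trmxK mulmxA hM.
Qed.

Lemma qf_lin m (M : 'M[R]_m) u v w a b :
  qf u M (a *: v + b *: w) = a * qf u M v + b * qf u M w.
Proof. by rewrite /qf mulmxDr -!scalemxAr !mxE. Qed.

Lemma qfD m (M : 'M[R]_m) u v w : qf u M (v + w) = qf u M v + qf u M w.
Proof. by rewrite /qf mulmxDr [LHS]mxE. Qed.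
Lemma qfB m (M : 'M[R]_m) u v w : qf u M (v - w) = qf u M v - qf u M w.
Proof. by rewrite /qf mulmxBr [LHS]mxE [X in _ + X]mxE. Qed.
Lemma qfZ m (M : 'M[R]_m) u v a : qf u M (a *: v) = a * qf u M v.
Proof. by rewrite /qf -scalemxAr [LHS]mxE. Qed.

Lemma qf0 m (M : 'M[R]_m) v : qf 0 M v = 0.
Proof. by rewrite /qf trmx0 !mul0mx mxE. Qed.

Lemma lyap m (A P : 'M[R]_m) (e pu qu : 'cV[R]_m) (pb qb c x y : R) :
  P^T = P -> (forall v, 0 <= qf v P v) -> neg_def (A^T *m P + P *m A) -> P *m e = e ->
  A *m pu = x *: pu - y *: qu + (c * pb) *: e ->
  A *m qu = y *: pu + x *: qu + (c * qb) *: e ->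
  (pu != 0 \/ qu != 0) -> 0 <= x -> 0 < c ->
  pb * (e^T *m pu) 0 0 + qb * (e^T *m qu) 0 0 < 0.
Proof.
move=> hPT hP [_ hS] hPe hp hq hpq hx hc.
set S := A^T *m P + P *m A.
have key u : qf u S u = 2 * qf u P (A *m u).
  rewrite /qf /S mulmxDr mulmxDl mxE [X in X + _ = _](_ : _ = qf (A *m u) P u).
    by rewrite qf_sym // /qf !mulmxA mulr2n mulrDl mul1r.
  by rewrite /qf trmx_mul !mulmxA.
have hle u : qf u S u <= 0.
  have [->|/hS /ltW //] := eqVneq u 0; by rewrite qf0.
have hneg : qf pu S pu + qf qu S qu < 0.
  have hS' : forall v, v != 0 -> qf v S v < 0 := hS.
  have := hle pu; have := hle qu.
  case: hpq => [/hS' h|/hS' h]; lra.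
have hPe' u : qf u P e = (e^T *m u) 0 0.
  rewrite /qf -mulmxA hPe.
  transitivity ((u^T *m e)^T 0 0); first by rewrite [RHS]mxE.
  by rewrite trmx_mul trmxK.
have e1 : qf pu P (A *m pu) = x * qf pu P pu - y * qf pu P qu + c * pb * (e^T *m pu) 0 0.
  by rewrite hp qfD qfB !qfZ hPe'.
have e2 : qf qu P (A *m qu) = y * qf qu P pu + x * qf qu P qu + c * qb * (e^T *m qu) 0 0.
  by rewrite hq !qfD !qfZ hPe'.
move: hneg; rewrite !key e1 e2 (qf_sym _ _ qu pu hPT).
have := hP pu; have := hP qu.
nra.
Qed.
End Lyap.
Arguments qf {R m}.
Section Mats.
Variable R : realType.
Variable n : nat.
Variable ln : 'I_n.
Hypothesis hlnv : (ln : nat) = n.-1.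

Lemma enE i : en R n i 0 = (i == ln)%:R.
Proof.
rewrite /en mxE; have -> : (i == n.-1 :> nat) = (i == ln).
  by rewrite -hlnv.
by case: (i == ln).
Qed.

Lemma xlastE (x : 'cV[R]_n) : xlast x = x ln 0.
Proof.
rewrite /xlast mxE (bigD1 ln) //= big1 ?addr0.
  by rewrite mxE enE eqxx mul1r.
by move=> k hk; rewrite mxE enE (negbTE hk) mul0r.
Qed.

Lemma enTen : (en R n)^T *m en R n = 1%:M.
Proof.
apply/matrixP => i j; rewrite (ord1 i) (ord1 j) !mxE (bigD1 ln) //= big1 ?addr0.
  by rewrite mxE !enE eqxx mulr1.
by move=> k hk; rewrite mxE enE (negbTE hk) mul0r.
Qed.

Lemma STen : (Smat R n)^T *m en R n = 0.
Proof.
apply/matrixP => i j; rewrite (ord1 j) !mxE big1 // => k _.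
rewrite !mxE; case: (k == i :> nat) /eqP => hki; last by rewrite mul0r.
case: (k == n.-1 :> nat) /eqP => hk; last by rewrite mulr0.
by have := ltn_ord i; rewrite -hki hk ltnn.
Qed.

Lemma diagPe (P1 : 'M[R]_n.-1) : diagP P1 *m en R n = en R n.
Proof.
rewrite /diagP mulmxDl -!mulmxA STen enTen !mulmx0 add0r mulmx1 //.
Qed.

Lemma diagP_sym (P1 : 'M[R]_n.-1) : P1^T = P1 -> (diagP P1)^T = diagP P1.
Proof.
move=> h; rewrite /diagP raddfD /= !trmx_mul !trmxK h mulmxA //.
Qed.

Lemma diagP_psd (P1 : 'M[R]_n.-1) : pos_def P1 ->
  forall v : 'cV[R]_n, 0 <= qf v (diagP P1) v.
Proof.
move=> [_ hP1] v.
have -> : qf v (diagP P1) v = qf ((Smat R n)^T *m v) P1 ((Smat R n)^T *m v) + ((en R n)^T *m v) 0 0 ^+ 2.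
  rewrite /qf /diagP mulmxDr mulmxDl [LHS]mxE; congr (_ + _).
    by rewrite trmx_mul trmxK !mulmxA.
  rewrite !mulmxA -(mulmxA (v^T *m en R n)).
  set w := (en R n)^T *m v.
  have -> : v^T *m en R n = w^T by rewrite /w trmx_mul trmxK.
  rewrite mxE big_ord1 mxE expr2 //.
have [->|hw] := eqVneq ((Smat R n)^T *m v) 0.
  by rewrite qf0 add0r sqr_ge0.
by apply: addr_ge0; [exact/ltW/hP1|exact: sqr_ge0].
Qed.
End Mats.
Lemma scalar_contra (R : realType) (theta E z1 z2 x y a1 a2 b1 b2 pn qn : R) :
  0 < theta -> 0 < E -> 0 < z1 -> 0 < z2 -> 0 <= x ->
  - E * (z1 * b1 + z2 * a1) = x * a1 - y * a2 ->
  theta * pn - E * (z1 * b1 + z2 * a1) = x * b1 - y * b2 ->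
  - E * (z1 * b2 + z2 * a2) = y * a1 + x * a2 ->
  theta * qn - E * (z1 * b2 + z2 * a2) = y * b1 + x * b2 ->
  b1 * pn + b2 * qn < 0 -> False.
Proof.
move=> ht hE hz1 hz2 hx e1 e2 e3 e4 hneg.
set K := E * z1; set D := E * z2.
have hK : 0 < K by rewrite /K mulr_gt0.
have hD : 0 < D by rewrite /D mulr_gt0.
have r1 : theta * pn - (x * (b1 - a1) - y * (b2 - a2)) = 0.
  by lra.
have r2 : theta * qn - (x * (b2 - a2) + y * (b1 - a1)) = 0.
  by lra.
have s1 : K * b1 - (- (D + x) * a1 + y * a2) = 0.
  rewrite /K /D; lra.
have s2 : K * b2 - (- (D + x) * a2 - y * a1) = 0.
  rewrite /K /D; lra.
have id : K * theta * (b1 * pn + b2 * qn) =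
  K * b1 * (theta * pn - (x * (b1 - a1) - y * (b2 - a2)))
  + K * b2 * (theta * qn - (x * (b2 - a2) + y * (b1 - a1)))
  - x * (a1 * (K * b1 - (- (D + x) * a1 + y * a2)) + a2 * (K * b2 - (- (D + x) * a2 - y * a1)))
  + y * (a2 * (K * b1 - (- (D + x) * a1 + y * a2)) - a1 * (K * b2 - (- (D + x) * a2 - y * a1)))
  + x * K * (b1 ^+ 2 + b2 ^+ 2) + x * (D + x) * (a1 ^+ 2 + a2 ^+ 2) + y ^+ 2 * (a1 ^+ 2 + a2 ^+ 2).
  by ring.
rewrite r1 r2 s1 s2 !(mulr0, addr0, subr0, add0r, sub0r, oppr0) in id.
have h1 : 0 <= x * K * (b1 ^+ 2 + b2 ^+ 2).
  by apply: mulr_ge0; [apply: mulr_ge0 => //; exact: ltW hK| apply: addr_ge0; exact: sqr_ge0].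
have h2 : 0 <= x * (D + x) * (a1 ^+ 2 + a2 ^+ 2).
  by apply: mulr_ge0; [apply: mulr_ge0 => //; apply: addr_ge0 => //; exact: ltW hD| apply: addr_ge0; exact: sqr_ge0].
have h3 : 0 <= y ^+ 2 * (a1 ^+ 2 + a2 ^+ 2).
  by apply: mulr_ge0; [exact: sqr_ge0| apply: addr_ge0; exact: sqr_ge0].
have h4 : K * theta * (b1 * pn + b2 * qn) < 0.
  by rewrite pmulr_rlt0 // mulr_gt0.
lra.
Qed.
Lemma enen (R : realType) n (v : 'cV[R]_n) :
  en R n *m (en R n)^T *m v = xlast v *: en R n.
Proof.
rewrite -mulmxA.
have -> : (en R n)^T *m v = (xlast v)%:M.
  by apply/matrixP => i k; rewrite (ord1 i) (ord1 k) /xlast [RHS]mxE eqxx mulr1n.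
by rewrite mul_mx_scalar.
Qed.
Lemma Re_lt0 (R : realType) (lam : R[i]) : ('Re lam < 0) = (complex.Re lam < 0).
Proof. by rewrite -complexRe ltcE /= eqxx. Qed.

Theorem mainTheorem14 (R : realType) (n : nat) (hn : (2 <= n)%N)
  (f : 'cV[R]_n -> 'cV[R]_n) (hf : C1 f)
  (b0 : 'cV[R]_n) (hb0 : nonneg_vec b0)
  (mu theta : R) (hmu : 0 < mu) (htheta : 0 < theta)
  (xs : 'cV[R]_n) (us : R) (hxs : nonneg_vec xs) (hus : 0 < us)
  (hxn : xlast xs = mu / theta)
  (heq : f xs - (us * (mu / theta)) *: en R n + b0 = 0)
  (hH : 0 < Hn (jac f xs - us *: (en R n *m (en R n)^T)) 0)
  (P1 : 'M[R]_n.-1) (hP1 : pos_def P1)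
  (hLyap : neg_def ((jac f xs - us *: (en R n *m (en R n)^T))^T *m diagP P1
                    + diagP P1 *m (jac f xs - us *: (en R n *m (en R n)^T)))) :
  forall eta kp : R, 0 < eta -> 0 < kp ->
    loc_exp_stable (closed_loop f b0 mu theta eta kp)
                   (eq_point xs (mu / (eta * us)) (us / kp)).
Proof.
move=> eta kp heta hkp lam hlam.
have hn0 : (0 < n)%N by apply: leq_trans hn.
have hlt : (n.-1 < n)%N by rewrite ltn_predL.
pose ln := Ordinal hlt.
have hlnv : (ln : nat) = n.-1 by [].
have hln := @xlastE R n ln hlnv.
have hfd := hf.1.
set F := closed_loop f b0 mu theta eta kp.
set ye := eq_point xs (mu / (eta * us)) (us / kp).
have [p [q [hpq [hp hq]]]] := @eig_real R _ _ lam hlam.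
rewrite Re_lt0 ltNge; apply/negP => hx.
move: hp hq; set x := complex.Re lam; set y := complex.Im lam => hp hq.
rewrite jac_mul in hp; rewrite jac_mul in hq.
pose L : 'I_(n + 2) := lshift 2 ln.
pose Z1 : 'I_(n + 2) := rshift n (0 : 'I_2).
pose Z2 : 'I_(n + 2) := rshift n (1 : 'I_2).
have yeL : ye L 0 = mu / theta by rewrite /ye /eq_point col_mxEu -hln hxn.
have yeZ1 : ye Z1 0 = mu / (eta * us) by rewrite /ye /eq_point col_mxEd mxE.
have yeZ2 : ye Z2 0 = us / kp by rewrite /ye /eq_point col_mxEd mxE.
have yeU : usubmx ye = xs by rewrite /ye /eq_point col_mxKu.
have dT := @dF_top R n f hfd b0 mu theta eta kp ln hln ye.
have dZ1 := @dF_Z1 R n f hfd b0 mu theta eta kp ln hln ye.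
have dZ2 := @dF_Z2 R n f hfd b0 mu theta eta kp ln hln ye.
rewrite -/L -/Z1 -/Z2 -/F yeU in dT dZ1 dZ2.
have E1p := congr1 (fun A : 'cV[R]_(n + 2) => A Z1 0) hp.
have E2p := congr1 (fun A : 'cV[R]_(n + 2) => A Z2 0) hp.
have E1q := congr1 (fun A : 'cV[R]_(n + 2) => A Z1 0) hq.
have E2q := congr1 (fun A : 'cV[R]_(n + 2) => A Z2 0) hq.
rewrite /= dZ1 yeZ1 yeZ2 !mxE in E1p.
rewrite /= dZ2 yeZ1 yeZ2 !mxE in E2p.
rewrite /= dZ1 yeZ1 yeZ2 !mxE in E1q.
rewrite /= dZ2 yeZ1 yeZ2 !mxE in E2q.
set A := jac f xs - us *: (en R n *m (en R n)^T).
set pu := usubmx p; set qu := usubmx q.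
set c := kp * (mu / theta).
set z2e := us / kp.
have hus' : us = kp * z2e by rewrite /z2e mulrC divfK // gt_eqF.
have topE (v w : 'cV[R]_(n + 2)) (a b : R) :
    'd F ye v = a *: v - b *: w ->
    A *m usubmx v = a *: usubmx v - b *: usubmx w + (c * v Z2 0) *: en R n.
  move=> hv; apply/matrixP => j k; rewrite (ord1 k).
  have T := congr1 (fun B : 'cV[R]_(n + 2) => B (lshift 2 j) 0) hv.
  rewrite /= dT yeL yeZ2 !mxE in T.
  rewrite /A mulmxBl jac_mul -scalemxAl enen hln !mxE.
  rewrite -/L -/z2e in T *.
  rewrite hus' /c; lra.
have hAp := topE p q x y hp.
have hq' : 'd F ye q = x *: q - (- y) *: p by rewrite hq scaleNr opprK addrC.
have hAq := topE q p x (- y) hq'.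
rewrite scaleNr opprK [x *: _ + _]addrC in hAq.
rewrite -/pu -/qu in hAp hAq.
have hpn : ((en R n)^T *m pu) 0 0 = p L 0 by rewrite -/(xlast pu) hln mxE.
have hqn : ((en R n)^T *m qu) 0 0 = q L 0 by rewrite -/(xlast qu) hln mxE.
have hz1 : 0 < mu / (eta * us) by rewrite divr_gt0 // mulr_gt0.
have hz2 : 0 < z2e by rewrite divr_gt0.
have hE : 0 < eta * kp by rewrite mulr_gt0.
have hc : 0 < c by rewrite mulr_gt0 // divr_gt0.
have hnd : pu != 0 \/ qu != 0 -> p Z2 0 * p L 0 + q Z2 0 * q L 0 < 0.
  move=> hpq'; rewrite -hpn -hqn.
  exact: (@lyap R n A (diagP P1) (en R n) pu qu (p Z2 0) (q Z2 0) c x y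
    (@diagP_sym R n P1 hP1.1) (@diagP_psd R n P1 hP1) hLyap (@diagPe R n ln hlnv P1)
    hAp hAq hpq' hx hc).
have [hpu0|hpu] := eqVneq pu 0; last first.
  by apply: (@scalar_contra R theta (eta * kp) (mu / (eta * us)) z2e x y
     (p Z1 0) (q Z1 0) (p Z2 0) (q Z2 0) (p L 0) (q L 0) htheta hE hz1 hz2 hx E1p E2p E1q E2q); apply: hnd; left.
have [hqu0|hqu] := eqVneq qu 0; last first.
  by apply: (@scalar_contra R theta (eta * kp) (mu / (eta * us)) z2e x y
     (p Z1 0) (q Z1 0) (p Z2 0) (q Z2 0) (p L 0) (q L 0) htheta hE hz1 hz2 hx E1p E2p E1q E2q); apply: hnd; right.
have epb : p Z2 0 = 0.
  have := congr1 (fun B : 'cV[R]_n => B ln 0) hAp.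
  rewrite hpu0 hqu0 mulmx0 !scaler0 subr0 add0r !mxE /= eqxx mulr1.
  by move/esym/eqP; rewrite mulf_eq0 (gt_eqF hc) /= => /eqP.
have eqb : q Z2 0 = 0.
  have := congr1 (fun B : 'cV[R]_n => B ln 0) hAq.
  rewrite hpu0 hqu0 mulmx0 !scaler0 addr0 add0r !mxE /= eqxx mulr1.
  by move/esym/eqP; rewrite mulf_eq0 (gt_eqF hc) /= => /eqP.
have epn : p L 0 = 0 by rewrite -hpn hpu0 mulmx0 mxE.
have eqn : q L 0 = 0 by rewrite -hqn hqu0 mulmx0 mxE.
rewrite epb eqb epn in E2p; rewrite epb eqb eqn in E2q.
have epa : p Z1 0 = 0.
  have : (eta * kp * z2e) * p Z1 0 = 0 by rewrite -/z2e in E2p; lra.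
  have hEz : 0 < eta * kp * z2e by rewrite mulr_gt0.
  by move/eqP; rewrite mulf_eq0 (gt_eqF hEz) /= => /eqP.
have eqa : q Z1 0 = 0.
  have : (eta * kp * z2e) * q Z1 0 = 0 by rewrite -/z2e in E2q; lra.
  have hEz : 0 < eta * kp * z2e by rewrite mulr_gt0.
  by move/eqP; rewrite mulf_eq0 (gt_eqF hEz) /= => /eqP.
have zero (v : 'cV[R]_(n + 2)) : usubmx v = 0 -> v Z1 0 = 0 -> v Z2 0 = 0 -> v = 0.
  move=> hu h1 h2; apply/matrixP => i k; rewrite (ord1 k) mxE.
  rewrite -(splitK i); case: (fintype.split i) => [j|kk] /=.
    by have := congr1 (fun B : 'cV[R]_n => B j 0) hu; rewrite !mxE.
  have [->|->] : kk = 0 \/ kk = 1.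
    by case: kk => [[|[|]]] //= ?; [left|right]; apply/val_inj.
    by [].
  by [].
by case: hpq => /eqP; apply; apply: zero.
Qed.
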